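(* Let $\mathfrak S$ be a commutative semiring and $\sigma_{\mathfrak S}$ a set of ideals of $\mathfrak S$ that contains the zero ideal $\{0\}$. Then $\sigma_{\mathfrak S}$, endowed with the ideal topology, is connected.
   Context: A semiring $(\mathfrak S,+,0,\cdot,1)$ has $(\mathfrak S,+,0)$ a commutative monoid, $(\mathfrak S,\cdot,1)$ a monoid, $0r=r0=0$, and two-sided distributivity; all semirings are commutative. An ideal is a nonempty proper subset closed under addition and under multiplication by elements of $\mathfrak S$. For an ideal $\mathfrak a$, $\mathfrak a^{\uparrow}=\{\mathfrak x\in\sigma_{\mathfrak S}\mid\mathfrak a\subseteq\mathfrak x\}$; the ideal topology on $\sigma_{\mathfrak S}$ has these sets ($\mathfrak a$ any ideal) as a subbasis of closed sets. *)

(* Defs.v *)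
From HB Require Import structures.
From mathcomp Require Import all_boot all_algebra.
From mathcomp Require Import boolp classical_sets.
Set Implicit Arguments. Unset Strict Implicit. Unset Printing Implicit Defensive.
Import GRing.Theory.
Local Open Scope ring_scope.
Local Open Scope classical_set_scope.

Definition is_ideal (S : comPzSemiRingType) (a : set S) : Prop :=
  [/\ a !=set0, a <> setT,
      (forall x y, a x -> a y -> a (x + y)) &
      (forall r x, a x -> a (r * x))].

Definition zero_ideal (S : comPzSemiRingType) : set S := [set 0].
Arguments zero_ideal S : clear implicits.

Definition up_set (S : comPzSemiRingType) (sigma : set (set S)) (a : set S)
  : set (set S) := [set x | sigma x /\ a `<=` x].

(* Finite unions of subbasic closed sets (n = 0 gives the empty set). *)
Definition finunion_up (S : comPzSemiRingType) (sigma : set (set S))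
  (B : set (set S)) : Prop :=
  exists (n : nat) (f : 'I_n -> set S),
    (forall i, is_ideal (f i)) /\
    B = [set x | exists i, up_set sigma (f i) x].

(* Closed sets of the ideal topology on sigma: the topology generated by the
   subbasis of closed sets a^uparrow, i.e. arbitrary intersections (inside sigma)
   of finite unions of subbasic closed sets. *)
Definition ideal_closed (S : comPzSemiRingType) (sigma : set (set S))
  (C : set (set S)) : Prop :=
  exists P : set (set (set S)),
    (forall B, P B -> finunion_up sigma B) /\
    C = [set x | sigma x /\ forall B, P B -> B x].

Definition ideal_connected (S : comPzSemiRingType) (sigma : set (set S)) : Prop :=
  forall C1 C2 : set (set S),
    ideal_closed sigma C1 -> ideal_closed sigma C2 ->
    C1 `|` C2 = sigma -> C1 `&` C2 = set0 ->
    C1 = set0 \/ C2 = set0.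

(* Main.v *)
Require Import Defs.
From mathcomp Require Import all_boot all_algebra.
From mathcomp Require Import boolp classical_sets.
Import GRing.Theory.
Local Open Scope ring_scope.
Local Open Scope classical_set_scope.

Lemma closed_zero_all (S : comPzSemiRingType) (sigma : set (set S))
  (Hsigma : forall x, sigma x -> is_ideal x) (C : set (set S)) :
  ideal_closed sigma C -> C (zero_ideal S) -> forall y, sigma y -> C y.
Proof.
move=> [P [HP ->]] [Hs0 HB] y sy; split => // B PB.
have := HB B PB.
have [n [f [_ EB]]] := HP B PB.
rewrite EB /= => -[i [_ sub]]; exists i; split => // z fz.
have -> : z = 0 by have := sub z fz.
have [[x0 yx0] _ _ Hm] := Hsigma y sy.
by have := Hm 0 x0 yx0; rewrite mul0r.
Qed.

Theorem theorem3p13 (S : comPzSemiRingType) (sigma : set (set S))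
  (Hsigma : forall x, sigma x -> is_ideal x)
  (Hzero : sigma (zero_ideal S)) :
  ideal_connected sigma.
Proof.
move=> C1 C2 c1 c2 U I.
have : (C1 `|` C2) (zero_ideal S) by rewrite U.
case=> [h|h].
- right; apply/seteqP; split => // y C2y.
  have sy : sigma y by rewrite -U; right.
  have : (C1 `&` C2) y.
    by split; [exact: (@closed_zero_all S sigma Hsigma C1 c1 h y sy) | exact: C2y].
  by rewrite I.
- left; apply/seteqP; split => // y C1y.
  have sy : sigma y by rewrite -U; left.
  have : (C1 `&` C2) y.
    by split; [exact: C1y | exact: (@closed_zero_all S sigma Hsigma C2 c2 h y sy)].
  by rewrite I.
Qed.
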